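(* Let $\varphi,\psi\in G$ satisfy $\gamma_{\psi/\varphi}>0$, and let $E$ and $F$ be symmetric spaces on $[0,1]$ with fundamental functions $\varphi$ and $\psi$, respectively. Then $E\subset F$ and the identity inclusion operator $I:E\to F$ is disjointly strictly singular.
   Context: All functions are Lebesgue measurable on $[0,1]$, $\mu$ is Lebesgue measure. A symmetric space (SS) on $[0,1]$ is a Banach space $E$ of measurable functions on $[0,1]$ such that: (1) if $y\in E$ and $|x(t)|\le |y(t)|$ then $x\in E$ and $\|x\|\le\|y\|$; (2) if $y\in E$ and $x,y$ are equimeasurable (i.e. $\mu\{|x|>\tau\}=\mu\{|y|>\tau\}$ for all $\tau>0$) then $x\in E$ and $\|x\|=\|y\|$. The fundamental function of $E$ is $f_E(t)=\|\chi_{(0,t)}\|_E$. $G$ denotes the class of all positive increasing concave functions on $(0,1]$. For a positive function $f$ on $(0,1]$, its dilation function is $\mathcal M_f(t)=\sup\{f(st)/f(s):0<s\le\min(1,1/t)\}$ for $t>0$, and its lower dilation index is $\gamma_f=\lim_{t\to0}\ln\mathcal M_f(t)/\ln t$. A bounded linear operator $T$ from a Banach lattice $X$ into a Banach space $Y$ is disjointly strictly singular (DSS) if there is no sequence of nonzero pairwise disjoint elements $x_n\in X$ such that the restriction of $T$ to their closed linear span $[x_n]$ is an isomorphism (onto its image). *)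

(* Defs.v *)
From HB Require Import structures.
From mathcomp Require Import all_boot all_order all_algebra.
From mathcomp Require Import all_classical all_reals all_analysis.
Set Implicit Arguments. Unset Strict Implicit. Unset Printing Implicit Defensive.
Import Order.TTheory GRing.Theory Num.Theory.
Import numFieldNormedType.Exports.
Local Open Scope classical_set_scope.
Local Open Scope ring_scope.

(* Functions on [0,1] are represented as R -> R; only their values on
   I01 = [0,1] matter (Lebesgue measure restricted to [0,1]). *)

Definition I01 {R : realType} : set R := `[0, 1]%classic.

Definition ae01 {R : realType} (P : R -> Prop) : Prop :=
  (@lebesgue_measure R).-negligible (I01 `&` [set t | ~ P t]).

Definition equimeasurable {R : realType} (x y : R -> R) : Prop :=
  forall tau : R, 0 < tau ->
    (@lebesgue_measure R) (I01 `&` [set t | tau < `|x t|]) =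
    (@lebesgue_measure R) (I01 `&` [set t | tau < `|y t|]).

Record SymSpace (R : realType) := {
  ss_mem : set (R -> R);
  ss_nrm : (R -> R) -> R;
  ss_meas : forall x, ss_mem x -> measurable_fun I01 x;
  ss_mem0 : ss_mem (fun _ => 0);
  ss_memD : forall x y, ss_mem x -> ss_mem y -> ss_mem (fun t => x t + y t);
  ss_memZ : forall (a : R) x, ss_mem x -> ss_mem (fun t => a * x t);
  ss_nrmD : forall x y, ss_mem x -> ss_mem y ->
     ss_nrm (fun t => x t + y t) <= ss_nrm x + ss_nrm y;
  ss_nrmZ : forall (a : R) x, ss_mem x -> ss_nrm (fun t => a * x t) = `|a| * ss_nrm x;
  ss_nrm_ge0 : forall x, ss_mem x -> 0 <= ss_nrm x;
  ss_nrm_eq0 : forall x, ss_mem x -> (ss_nrm x = 0 <-> ae01 (fun t => x t = 0));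
  ss_complete : forall u : nat -> R -> R, (forall n, ss_mem (u n)) ->
     (forall e : R, 0 < e -> exists N : nat, forall m n : nat, (N <= m)%N -> (N <= n)%N ->
        ss_nrm (fun t => u n t - u m t) < e) ->
     exists x, ss_mem x /\ forall e : R, 0 < e -> exists N : nat, forall n : nat, (N <= n)%N ->
        ss_nrm (fun t => u n t - x t) < e;
  ss_ideal : forall x y : R -> R, ss_mem y -> measurable_fun I01 x ->
     (forall t, I01 t -> `|x t| <= `|y t|) -> ss_mem x /\ ss_nrm x <= ss_nrm y;
  ss_symm : forall x y : R -> R, ss_mem y -> measurable_fun I01 x -> equimeasurable x y ->
     ss_mem x /\ ss_nrm x = ss_nrm y
}.

Definition has_fundamental_function {R : realType} (E : SymSpace R) (phi : R -> R) : Prop :=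
  forall t : R, 0 < t <= 1 ->
    ss_mem E (\1_(`]0, t[%classic) : R -> R) /\ ss_nrm E (\1_(`]0, t[%classic) : R -> R) = phi t.

Definition classG {R : realType} (f : R -> R) : Prop :=
  (forall t : R, 0 < t <= 1 -> 0 < f t) /\
  (forall s t : R, 0 < s -> s <= t -> t <= 1 -> f s <= f t) /\
  (forall s t l : R, 0 < s <= 1 -> 0 < t <= 1 -> 0 <= l <= 1 ->
      l * f s + (1 - l) * f t <= f (l * s + (1 - l) * t)).

Definition dilation {R : realType} (f : R -> R) (t : R) : R :=
  sup [set f (s * t) / f s | s in `]0, Num.min 1 t^-1]%classic].

Definition lower_dilation_index {R : realType} (f : R -> R) : R :=
  lim ((fun t => ln (dilation f t) / ln t) @ 0^'+).

Definition clspan {R : realType} (E : SymSpace R) (xs : nat -> R -> R) : set (R -> R) :=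
  [set y | ss_mem E y /\ forall e : R, 0 < e ->
     exists (N : nat) (a : nat -> R),
       ss_nrm E (fun t => y t - \sum_(i < N) a i * xs i t) < e].

(* the inclusion E -> F is disjointly strictly singular: there is no sequence
   of nonzero pairwise disjoint x_n in E such that the inclusion restricted to
   [x_n] is an isomorphism onto its image (i.e. bounded below there) *)
Definition inclusion_DSS {R : realType} (E F : SymSpace R) : Prop :=
  ~ exists xs : nat -> R -> R,
      (forall n, ss_mem E (xs n)) /\
      (forall n, ~ ae01 (fun t => xs n t = 0)) /\
      (forall n m, n <> m -> ae01 (fun t => xs n t * xs m t = 0)) /\
      exists c : R, 0 < c /\ forall y, clspan E xs y -> c * ss_nrm E y <= ss_nrm F y.

(* Main.v *)
Require Import Defs.
From HB Require Import structures.
From mathcomp Require Import all_boot all_order all_algebra.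
From mathcomp Require Import all_classical all_reals all_analysis.
Import Order.TTheory GRing.Theory Num.Theory.
Import numFieldNormedType.Exports.
Local Open Scope classical_set_scope.
Local Open Scope ring_scope.
From mathcomp Require Import ring lra.

Section Gen.
Set Implicit Arguments. Unset Strict Implicit.
Variable R : realType.
Notation mu := (@lebesgue_measure R).

Lemma mI01 : measurable (@I01 R).
Proof. exact: measurable_itv. Qed.

Lemma lvl (x : R -> R) (c : R) : measurable_fun I01 x ->
  measurable (I01 `&` [set t | c < `|x t|]).
Proof.
move=> mx.
have : measurable_fun I01 (fun t => `|x t|) by apply: measurableT_comp.
move=> /(_ mI01 `]c, +oo[%classic (measurable_itv _)).
congr measurable; apply/seteqP; split=> t /=; rewrite in_itv /= andbT //.
Qed.

Lemma muI01 : mu I01 = 1%:E.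
Proof. by rewrite /I01 lebesgue_measure_itv /= lte_fin ltr01 /= oppr0 adde0. Qed.

Lemma mu_le1 (A : set R) : measurable A -> A `<=` I01 -> (mu A <= 1%:E)%E.
Proof. by move=> mA AI; rewrite -muI01; apply: le_measure => //; rewrite inE //; apply: mI01. Qed.

Lemma mu_fin (A : set R) : measurable A -> A `<=` I01 -> mu A = (fine (mu A))%:E.
Proof.
move=> mA AI; rewrite fineK // ge0_fin_numE ?measure_ge0 //.
by rewrite (le_lt_trans (mu_le1 mA AI)) ?ltry.
Qed.

Lemma fine_ge0' (A : set R) : 0 <= fine (mu A).
Proof. by apply: fine_ge0; apply: measure_ge0. Qed.

Lemma fine_le1 (A : set R) : measurable A -> A `<=` I01 -> fine (mu A) <= 1.
Proof. by move=> mA AI; rewrite -lee_fin -mu_fin // mu_le1. Qed.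

Variable S : SymSpace R.

Lemma nrm0 : ss_nrm S (fun _ => 0) = 0.
Proof.
have h := ss_nrmZ 0 (ss_mem0 S).
by rewrite normr0 !mul0r in h.
Qed.

Lemma aezero (w : R -> R) : measurable_fun I01 w -> ae01 (fun t => w t = 0) ->
  ss_mem S w /\ ss_nrm S w = 0.
Proof.
move=> mw hae.
have eq : equimeasurable w (fun _ => 0).
  move=> tau tau0.
  have -> : I01 `&` [set t | tau < `|(fun _ : R => 0 : R) t|] = set0.
    by apply/seteqP; split=> t //= [_]; rewrite normr0 ltNge (ltW tau0).
  rewrite measure0; apply/negligibleP; first exact: lvl.
  apply: negligibleS hae => t [It /= lt]; split => // w0.
  by move: lt; rewrite w0 normr0 ltNge (ltW tau0).
have [m e] := ss_symm (ss_mem0 S) mw eq.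
by split => //; rewrite e nrm0.
Qed.

Lemma lvl_ind (A : set R) (tau : R) : A `<=` I01 -> 0 < tau ->
  I01 `&` [set t | tau < `|(\1_A t : R)|] = if tau < 1 then A else set0.
Proof.
move=> AI tau0; apply/seteqP; split => t.
  move=> [It /=]; rewrite indicE.
  case: (boolP (t \in A)) => tA; rewrite ?normr1 ?normr0.
    by move=> h; rewrite h; move: tA; rewrite inE.
  by rewrite ltNge (ltW tau0).
case: ifP => [h1 At|_ //]; split; first exact: AI.
by rewrite /= indicE mem_set // normr1.
Qed.

Variable f : R -> R.
Hypothesis hf : has_fundamental_function S f.

Lemma ind_mem (A : set R) : measurable A -> A `<=` I01 ->
  ss_mem S (\1_A) /\ (mu A = 0 -> ss_nrm S (\1_A) = 0) /\
  ((0 < mu A)%E -> ss_nrm S (\1_A) = f (fine (mu A))).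
Proof.
move=> mA AI.
have mi : measurable_fun I01 (\1_A : R -> R) by apply: measurable_realfun.measurable_indic.
have h0 : mu A = 0 -> ss_mem S (\1_A) /\ ss_nrm S (\1_A) = 0.
  move=> A0; apply: aezero => //.
  have nA : mu.-negligible A by apply/negligibleP.
  apply: negligibleS nA.
  move=> t [It /=]; rewrite indicE; case: (boolP (t \in A)); first by rewrite inE.
  by [].
have [A0|Apos] := eqVneq (mu A) 0.
  have [m n] := h0 A0; split => //; split => // h.
  by move: h; rewrite A0 ltxx.
have Apos' : (0 < mu A)%E by rewrite lt0e Apos measure_ge0.
set m := fine (mu A).
have m0 : 0 < m by rewrite -lte_fin -mu_fin.
have m1 : m <= 1 by apply: fine_le1.
have [mm nm] := hf (t:=m) (ltac:(by rewrite m0 m1)).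
have eq : equimeasurable (\1_A) (\1_(`]0, m[%classic) : R -> R).
  move=> tau tau0; rewrite !lvl_ind //.
    case: ifP => // _; rewrite lebesgue_measure_itv /= lte_fin m0 /= oppr0 adde0.
    by rewrite -mu_fin.
  move=> t /=; rewrite !in_itv /= => /andP[h1 h2]; apply/andP; split; first exact: ltW.
  exact: (ltW (lt_le_trans h2 m1)).
have [ms ns] := ss_symm mm mi eq.
split => //; split; first by move=> A0; move: Apos; rewrite A0 eqxx.
by move=> _; rewrite ns nm.
Qed.

Hypothesis cf : classG f.

Lemma lowb (x : R -> R) (A : set R) (c : R) : ss_mem S x -> measurable A -> A `<=` I01 ->
  0 <= c -> (forall t, A t -> c <= `|x t|) -> (0 < mu A)%E ->
  c * f (fine (mu A)) <= ss_nrm S x.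
Proof.
move=> mx mA AI c0 cx Apos.
have [mi [_ ni]] := ind_mem mA AI.
have mf : measurable_fun I01 (fun t => c * (\1_A t : R)).
  by apply: measurable_realfun.measurable_funM => //; apply: measurable_realfun.measurable_indic.
have hle : forall t, I01 t -> `|c * (\1_A t : R)| <= `|x t|.
  move=> t _; rewrite indicE normrM ger0_norm //.
  case: (boolP (t \in A)) => tA.
    by rewrite normr1 mulr1; apply: cx; move: tA; rewrite inE.
  by rewrite normr0 mulr0.
have [_ le] := ss_ideal mx mf hle.
by rewrite -ni // -(ger0_norm c0) -ss_nrmZ.
Qed.

Lemma cG_pos t : 0 < t <= 1 -> 0 < f t.
Proof. by case: cf => h _; apply: h. Qed.

Lemma cG_mono s t : 0 < s -> s <= t -> t <= 1 -> f s <= f t.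
Proof. by case: cf => _ [h _]; apply: h. Qed.

Lemma smallmeas (x : R -> R) (c e : R) : ss_mem S x -> 0 < c -> 0 < e <= 1 ->
  ss_nrm S x < c * f e -> (mu (I01 `&` [set t | (c < `|x t|)%R]) <= e%:E)%E.
Proof.
move=> mx c0 /andP[e0 e1] lt.
set A := I01 `&` _.
have mA : measurable A by apply: lvl; exact: (ss_meas mx).
have AI : A `<=` I01 by move=> t [].
rewrite leNgt; apply/negP => hlt.
have Apos : (0 < mu A)%E by apply: lt_trans hlt; rewrite lte_fin.
have := lowb mx mA AI (ltW c0) (fun t h => ltW (proj2 h)) Apos.
have hm : e < fine (mu A) by rewrite -lte_fin -mu_fin.
have : f e <= f (fine (mu A)) by apply: cG_mono => //; [exact: ltW | exact: fine_le1].
move=> fle h2.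
have := le_trans (ler_wpM2l (ltW c0) fle) h2.
by rewrite leNgt lt.
Qed.

Lemma sum_mem (g : nat -> R -> R) (N : nat) : (forall k, ss_mem S (g k)) ->
  ss_mem S (fun t => \sum_(k < N) g k t) /\
  ss_nrm S (fun t => \sum_(k < N) g k t) <= \sum_(k < N) ss_nrm S (g k).
Proof.
move=> mg; elim: N => [|N [IHm IHn]].
  have -> : (fun t => \sum_(k < 0) g k t) = (fun _ => 0).
    by apply: funext => t; rewrite big_ord0.
  by rewrite nrm0 big_ord0; split => //; apply: ss_mem0.
have -> : (fun t => \sum_(k < N.+1) g k t) = (fun t => (\sum_(k < N) g k t) + g N t).
  by apply: funext => t; rewrite big_ord_recr.
rewrite big_ord_recr /=; split; first by apply: ss_memD.
apply: le_trans (ss_nrmD IHm (mg N)) _.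
by rewrite lerD2r.
Qed.

Lemma ss_memB (x y : R -> R) : ss_mem S x -> ss_mem S y -> ss_mem S (fun t => x t - y t).
Proof.
move=> mx my.
have -> : (fun t => x t - y t) = (fun t => x t + (-1) * y t).
  by apply: funext => t; rewrite mulN1r.
by apply: ss_memD => //; apply: ss_memZ.
Qed.

Lemma ss_nrmB_sym (x y : R -> R) : ss_mem S x -> ss_mem S y ->
  ss_nrm S (fun t => x t - y t) = ss_nrm S (fun t => y t - x t).
Proof.
move=> mx my.
have -> : (fun t => x t - y t) = (fun t => (-1) * (y t - x t)).
  by apply: funext => t; rewrite mulN1r opprB.
by rewrite ss_nrmZ ?normrN ?normr1 ?mul1r //; apply: ss_memB.
Qed.

End Gen.

Section CG.
Set Implicit Arguments. Unset Strict Implicit.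
Variable R : realType.

Lemma cG_half (f : R -> R) (s t : R) : classG f -> 0 < s <= 1 -> 0 < t <= 1 ->
  t / 2 * f s <= f (s * t).
Proof.
move=> [fpos [fmono fconc]] /andP[s0 s1] /andP[t0 t1].
have h2t : 0 < 2 - t by lra.
set l := t / (2 - t).
set u := s * t / 2.
have l0 : 0 <= l by apply: divr_ge0 => //; apply: ltW.
have l1 : l <= 1 by rewrite /l ler_pdivrMr // mul1r; lra.
have st1 : s * t <= 1 by rewrite mulr_ile1 // ltW.
have u0 : 0 < u by rewrite /u divr_gt0 // mulr_gt0.
have u1 : u <= 1 by rewrite /u ler_pdivrMr //; lra.
have := fconc s u l (ltac:(by rewrite s0 s1)) (ltac:(by rewrite u0 u1)) (ltac:(by rewrite l0 l1)).
have -> : l * s + (1 - l) * u = s * t.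
  by rewrite /l /u; field; rewrite lt0r_neq0.
move=> h.
have hf0 : 0 <= f s by apply: ltW; apply: fpos; rewrite s0 s1.
have hfu : 0 <= f u by apply: ltW; apply: fpos; rewrite u0 u1.
have e : t / 2 = l * ((2 - t) / 2) by rewrite /l; field; rewrite lt0r_neq0.
have le1 : t / 2 * f s <= l * f s.
  by rewrite e ler_wpM2r // ler_piMr // ler_pdivrMr //; lra.
apply: le_trans le1 _; apply: le_trans h.
by rewrite lerDl mulr_ge0 // subr_ge0.
Qed.

Variables phi psi : R -> R.
Hypothesis cphi : classG phi.
Hypothesis cpsi : classG psi.
Let g := fun t => psi t / phi t.

Lemma phi_pos t : 0 < t <= 1 -> 0 < phi t.
Proof. by case: cphi => h _; apply: h. Qed.
Lemma psi_pos t : 0 < t <= 1 -> 0 < psi t.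
Proof. by case: cpsi => h _; apply: h. Qed.
Lemma phi_mono s t : 0 < s -> s <= t -> t <= 1 -> phi s <= phi t.
Proof. by case: cphi => _ [h _]; apply: h. Qed.
Lemma psi_mono s t : 0 < s -> s <= t -> t <= 1 -> psi s <= psi t.
Proof. by case: cpsi => _ [h _]; apply: h. Qed.

Lemma g_pos t : 0 < t <= 1 -> 0 < g t.
Proof. by move=> h; rewrite /g divr_gt0 // ?phi_pos ?psi_pos. Qed.

Lemma gdil (r b u : R) : 0 < r <= 1 -> 0 < b <= 1 -> b * r <= u -> u <= b ->
  g u <= 2 / r * g b.
Proof.
move=> /andP[r0 r1] /andP[b0 b1] bru ub.
have br0 : 0 < b * r by rewrite mulr_gt0.
have u0 : 0 < u by apply: lt_le_trans bru.
have u1 : u <= 1 by apply: le_trans b1.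
have h1 : psi u <= psi b by apply: psi_mono.
have h2 : phi (b * r) <= phi u by apply: phi_mono.
have h3 : r / 2 * phi b <= phi (b * r) by apply: cG_half => //; rewrite ?b0 ?b1 ?r0 ?r1.
have pb : 0 < phi b by apply: phi_pos; rewrite b0 b1.
have pu : 0 < phi u by apply: phi_pos; rewrite u0 u1.
have qpos : 0 < r / 2 * phi b by rewrite mulr_gt0 // divr_gt0.
have -> : 2 / r * g b = psi b / (r / 2 * phi b).
  by rewrite /g; field; rewrite !lt0r_neq0.
rewrite /g ler_pM //.
- by apply: ltW; apply: psi_pos; rewrite u0 u1.
- by rewrite invr_ge0 ltW.
- by rewrite lef_pV2 ?posrE // (le_trans h3 h2).
Qed.

Lemma index_r : 0 < lower_dilation_index g ->
  exists r, 0 < r <= 1/2 /\ forall s, 0 < s <= 1 -> g (s * r) <= g s / 4.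
Proof.
set h := fun t => ln (dilation g t) / ln t.
move=> L0.
have [[l hl]|nex] := pselect (exists l : R, h t @[t --> (0:R)^'+] --> l); last first.
  move: L0; rewrite /lower_dilation_index /lim /lim_in xgetPN ?ltxx //.
  by move=> l hl; apply: nex; exists l.
have hL := cvgP l hl.
set L := lower_dilation_index g in L0.
have hL' : h t @[t --> (0:R)^'+] --> L by [].
set gam := L / 2.
have gam0 : 0 < gam by rewrite divr_gt0.
have gL : gam < L by rewrite /gam; lra.
have ev := @cvgr_gt _ _ _ (at_right_proper_filter (0:R)) _ L hL' gam gL.
set c := Num.min (1/2) (expR (- ln 4 / gam)).
have c0 : 0 < c by rewrite /c lt_min expR_gt0 andbT; lra.
have [t0 [[ht0 t0p] t0c]] := filter_ex (filterI (filterI ev (nbhs_right_gt 0)) (nbhs_right_lt c0)).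
have t0h : t0 < 1/2 by move: t0c; rewrite /c lt_min => /andP[].
have t0e : t0 < expR (- ln 4 / gam) by move: t0c; rewrite /c lt_min => /andP[].
have lt0 : ln t0 < 0 by apply: ln_lt0; rewrite t0p /=; lra.
have lt1 : ln t0 < - ln 4 / gam.
  by rewrite -[X in _ < X]expRK ltr_ln ?posrE ?expR_gt0.
have lt2 : gam * ln t0 < - ln 4 by rewrite mulrC -ltr_pdivlMr.
set M := dilation g t0.
have lnM : ln M < - ln 4.
  move: ht0; rewrite /h /= ltr_ndivlMr // => h1.
  exact: lt_trans h1 lt2.
have ln4 : 0 < ln (4 : R) by apply: ln_gt0; lra.
have M0 : 0 < M.
  rewrite ltNge; apply/negP => hM; move: lnM; rewrite ln0 //; lra.
have M4 : M < 1/4.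
  have q4 : (0:R) < 1/4 by lra.
  have : ln M < ln (1/4 : R) by rewrite div1r lnV ?posrE //; lra.
  by rewrite ltr_ln ?posrE.
have t01 : 0 < t0 <= 1 by rewrite t0p /=; lra.
have mn : Num.min 1 t0^-1 = 1 by rewrite min_l // invf_ge1 //; lra.
have elt : forall s, 0 < s <= 1 -> g (s * t0) <= 2 / t0 * g s.
  move=> s hs; apply: gdil => //.
  move: hs => /andP[s0 s1]; apply: ler_piMr; [exact: ltW | lra].
have hsup : has_sup [set g (s * t0) / g s | s in `]0, Num.min 1 t0^-1]%classic].
  split.
    exists (g (1 * t0) / g 1); exists 1 => //.
    by rewrite /= mn in_itv /= ltr01 lexx.
  exists (2 / t0) => _ [s hs <-].
  move: hs; rewrite /= mn in_itv /= => hs.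
  by rewrite ler_pdivrMr ?g_pos // elt.
exists t0; split; first by rewrite t0p /=; lra.
move=> s hs.
have hle : g (s * t0) / g s <= M.
  apply: sup_upper_bound => //; exists s => //.
  by rewrite /= mn in_itv.
have gs0 := g_pos hs.
rewrite ler_pdivrMr // in hle.
apply: (le_trans hle).
rewrite mulrC -ler_pdivlMl ?gs0 //.
rewrite mulrA mulVf ?mul1r; first lra.
by rewrite lt0r_neq0.
Qed.

Variable r : R.
Hypothesis r0 : 0 < r <= 1/2.
Hypothesis hr : forall s, 0 < s <= 1 -> g (s * r) <= g s / 4.

Lemma r01 : 0 < r <= 1.
Proof. by case/andP: r0 => a b; rewrite a /=; lra. Qed.

Lemma two_r : 1 <= 2 / r.
Proof. by case/andP: r0 => a b; rewrite ler_pdivlMr // mul1r; lra. Qed.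

Lemma gle_ind n : forall b u, 0 < b <= 1 -> b * r ^+ n <= u -> u <= b ->
  g u <= 2 / r * g b.
Proof.
have [ra rb] := andP r0.
elim: n => [|n IH] b u hb h1 h2.
  rewrite expr0 mulr1 in h1.
  have -> : u = b by apply/le_anti; rewrite h1 h2.
  by rewrite ler_peMl ?two_r // ltW // g_pos.
case: (leP (b * r) u) => hu.
  by apply: gdil => //; exact: r01.
have [b0 b1] := andP hb.
have hbr : 0 < b * r <= 1 by rewrite mulr_gt0 //=; apply: mulr_ile1; lra.
have := IH (b * r) u hbr _ (ltW hu).
rewrite -mulrA -exprS => /(_ h1) h3.
have p2r : 0 < 2 / r by rewrite divr_gt0.
apply: (le_trans h3); rewrite ler_pM2l //.
apply: (le_trans (hr hb)).
have := g_pos hb; lra.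
Qed.

Lemma gle u b : 0 < u -> u <= b -> b <= 1 -> g u <= 2 / r * g b.
Proof.
move=> u0 ub b1.
have b0 : 0 < b by apply: lt_le_trans ub.
have [ra rb] := andP r0.
have ab : `|r| < 1 by rewrite gtr0_norm //; lra.
have ev := @cvgr_lt _ _ _ eventually_filter _ 0 (cvg_expr ab) (u / b) (ltac:(by rewrite divr_gt0)).
have [n hn] := filter_ex ev.
apply: (gle_ind (n := n)) => //; first by rewrite b0 b1.
by rewrite mulrC -ler_pdivlMr // ltW.
Qed.

Lemma g_rj j : g (r ^+ j) <= (1/4) ^+ j * g 1.
Proof.
have [ra rb] := andP r0.
elim: j => [|j IH]; first by rewrite !expr0 mul1r.
have hj : 0 < r ^+ j <= 1 by rewrite exprn_gt0 //= exprn_ile1 //; lra.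
rewrite exprSr; apply: (le_trans (hr hj)).
rewrite exprSr; lra.
Qed.

Lemma g_small j u : 0 < u -> u <= r ^+ j -> g u <= 2 / r * ((1/4) ^+ j * g 1).
Proof.
have [ra rb] := andP r0.
move=> u0 uj.
apply: (le_trans (gle u0 uj _)); first by rewrite exprn_ile1 //; lra.
have p2r : 0 < 2 / r by rewrite divr_gt0.
by rewrite ler_pM2l // g_rj.
Qed.
End CG.

Section Reals.
Variable R : realType.

Lemma dom (v lam Q : R) N : 0 <= v -> 0 < lam -> 1 <= Q -> v <= lam * Q ^+ N ->
  v <= lam * ((v != 0)%R)%:R + \sum_(k < N) lam * Q ^+ k.+1 * ((lam * Q ^+ k < v)%R)%:R.
Proof.
move=> v0 l0 Q1.
have Q0 : 0 <= Q by apply: le_trans Q1.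
have tge0 : forall k : 'I_N.+1, 0 <= lam * Q ^+ k.+1 * ((lam * Q ^+ k < v)%R)%:R.
  by move=> k; rewrite !mulr_ge0 ?exprn_ge0 // ltW.
elim: N tge0 => [|N IH] tge0.
  rewrite expr0 mulr1 big_ord0 addr0 => vl.
  by case: eqP => [->|_]; rewrite ?mulr0 ?mulr1.
move=> vl; rewrite big_ord_recr /=.
have hs : 0 <= \sum_(k < N) lam * Q ^+ k.+1 * ((lam * Q ^+ k < v)%R)%:R.
  by apply: sumr_ge0 => k _; rewrite !mulr_ge0 ?exprn_ge0 // ltW.
have hb : 0 <= lam * ((v != 0)%R)%:R by rewrite mulr_ge0 // ltW.
case: (leP v (lam * Q ^+ N)) => hv.
  apply: le_trans (IH _ hv) _.
    by move=> k; rewrite !mulr_ge0 ?exprn_ge0 // ltW.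
  by rewrite lerD2l mulr0 addr0.
rewrite /= ?mulr1n mulr1.
apply: le_trans vl _; rewrite addrA lerDr; exact: addr_ge0.
Qed.

Lemma geo2 N : \sum_(k < N) (1/2 : R) ^+ k = 2 - 2 * (1/2) ^+ N.
Proof.
elim: N => [|N IH]; first by rewrite big_ord0 expr0; lra.
by rewrite big_ord_recr /= IH exprSr; lra.
Qed.

Lemma geo2le N : \sum_(k < N) (1/2 : R) ^+ k <= 2.
Proof.
rewrite geo2 gerBl mulr_ge0 // exprn_ge0 //; lra.
Qed.

Lemma quarter (J k j : nat) : (k <= J)%N -> (j <= J)%N ->
  (1/4 : R) ^+ J <= (1/2) ^+ k * (1/2) ^+ j.
Proof.
move=> kJ jJ.
have -> : (1/4 : R) = 1/2 * (1/2) by lra.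
rewrite exprMn ler_pM ?exprn_ge0 //; try lra.
  by apply: ler_wiXn2l => //; lra.
by apply: ler_wiXn2l => //; lra.
Qed.

End Reals.

Section Main.
Set Implicit Arguments. Unset Strict Implicit.
Variable R : realType.
Notation mu := (@lebesgue_measure R).
Variables (phi psi : R -> R) (E F : SymSpace R).
Hypothesis cphi : classG phi.
Hypothesis cpsi : classG psi.
Hypothesis hE : has_fundamental_function E phi.
Hypothesis hF : has_fundamental_function F psi.
Let g := fun t => psi t / phi t.
Variable r : R.
Hypothesis r0 : 0 < r <= 1/2.
Hypothesis hr : forall s, 0 < s <= 1 -> g (s * r) <= g s / 4.

Let K := 12 / r ^+ 2 * g 1.

Lemma K_ge0 : 0 <= K.
Proof.
have [ra _] := andP r0.
have g1 : 0 < g 1 by apply: (g_pos cphi cpsi); rewrite ltr01 lexx.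
apply: mulr_ge0; last exact: ltW.
by apply: divr_ge0 => //; apply: exprn_ge0; exact: ltW.
Qed.

Lemma lemA (x : R -> R) (A : set R) (j : nat) (M : R) :
  ss_mem E x -> measurable A -> A `<=` I01 ->
  (forall t, I01 t -> x t != 0 -> A t) -> (mu A <= (r ^+ j)%:E)%E ->
  (forall t, I01 t -> `|x t| <= M) ->
  ss_mem F x /\ ss_nrm F x <= K * (1/2) ^+ j * ss_nrm E x.
Proof.
move=> xE mA AI supp muA bnd.
have mx := ss_meas xE.
have [ra rb] := andP r0.
have r1 : r <= 1 by lra.
set rho := ss_nrm E x.
have rho0 : 0 <= rho by apply: ss_nrm_ge0.
have [rz|rpos] := eqVneq rho 0.
  have hae : ae01 (fun t => x t = 0) by apply/(ss_nrm_eq0 xE).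
  have [m n] := aezero F mx hae.
  by split => //; rewrite n rz mulr0.
have rhop : 0 < rho by rewrite lt0r rpos rho0.
have p1 : 0 < phi 1 by apply: (phi_pos cphi) => //; rewrite ltr01 lexx.
have g1 : 0 < g 1 by apply: (g_pos cphi cpsi) => //; rewrite ltr01 lexx.
set lam := 4 * rho / phi 1.
have lam0 : 0 < lam by rewrite /lam divr_gt0 // mulr_gt0.
set Q := r^-1.
have Q1 : 1 <= Q by rewrite /Q invf_ge1.
have Q0 : 0 < Q by rewrite /Q invr_gt0.
have QrK : forall k, Q ^+ k * r ^+ k = 1.
  by move=> k; rewrite -exprMn /Q mulVf ?expr1n // lt0r_neq0.
have [N hN] : exists N, M <= lam * Q ^+ N.
  have ab : `|r| < 1 by rewrite gtr0_norm //; lra.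
  have hp : 0 < lam / (`|M| + 1) by rewrite divr_gt0 // ltr_pwDr.
  have ev := @cvgr_lt _ _ _ eventually_filter _ 0 (cvg_expr ab) _ hp.
  have [n hn] := filter_ex ev.
  exists n; apply: (le_trans (ler_norm M)).
  have rn : 0 < r ^+ n by rewrite exprn_gt0.
  rewrite ltr_pdivlMr ?ltr_pwDr // in hn.
  have : `|M| + 1 <= lam * Q ^+ n.
    rewrite -(ler_pM2r rn) -mulrA QrK mulr1 mulrC; exact: ltW.
  lra.
set Ak := fun k : nat => I01 `&` [set t | (lam * Q ^+ k < `|x t|)%R].
have mAk : forall k, measurable (Ak k) by move=> k; apply: lvl.
have AkI : forall k, Ak k `<=` I01 by move=> k t [].
have AkA : forall k, Ak k `<=` A.
  move=> k t [It /= h]; apply: supp => //; apply/negP => /eqP x0.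
  move: h; rewrite x0 normr0 ltNge ltW // mulr_gt0 // exprn_gt0 //.
set y := fun t => lam * (\1_A t : R) + \sum_(k < N) (lam * Q ^+ k.+1) * (\1_(Ak k) t : R).
have [mA1 [nA0 nAp]] := ind_mem hF mA AI.
have yF : ss_mem F y.
  apply: ss_memD; first by apply: ss_memZ.
  have [h _] := @sum_mem R F (fun k t => (lam * Q ^+ k.+1) * (\1_(Ak k) t : R)) N (fun k => ss_memZ _ (proj1 (ind_mem hF (mAk k) (AkI k)))).
  exact: h.
have dx : forall t, I01 t -> `|x t| <= `|y t|.
  move=> t It.
  have y0 : 0 <= y t.
    apply: addr_ge0.
      by apply: mulr_ge0; [exact: ltW | rewrite indicE ler0n].
    apply: sumr_ge0 => k _; apply: mulr_ge0; last by rewrite indicE ler0n.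
    by apply: mulr_ge0; [exact: ltW | exact: exprn_ge0 (ltW Q0)].
  rewrite (ger0_norm y0).
  apply: le_trans (dom (normr_ge0 (x t)) lam0 Q1 (le_trans (bnd t It) hN)) _.
  rewrite /y; apply: lerD.
    apply: ler_wpM2l; first exact: ltW.
    rewrite indicE.
    case: (boolP (`|x t| != 0)) => hx; last by rewrite ler0n.
    rewrite mem_set //; apply: supp => //; by rewrite -normr_eq0.
  apply: ler_sum => k _; apply: ler_wpM2l.
    by apply: mulr_ge0; [exact: ltW | exact: exprn_ge0 (ltW Q0)].
  rewrite indicE.
  case: (boolP ((lam * Q ^+ k < `|x t|)%R)) => hk; last by rewrite ler0n.
  by rewrite mem_set.
have [xF xle] := ss_ideal yF mx dx.
split => //.
apply: (le_trans xle).
have [sm sle] := @sum_mem R F (fun k t => (lam * Q ^+ k.+1) * (\1_(Ak k) t : R)) N (fun k => ss_memZ _ (proj1 (ind_mem hF (mAk k) (AkI k)))).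
apply: (le_trans (ss_nrmD (ss_memZ lam mA1) sm)).
rewrite ss_nrmZ // (gtr0_norm lam0).
have hj0 : 0 <= (1/2 : R) ^+ j by rewrite exprn_ge0 //; lra.
have Cpos : forall c : R, 0 <= c -> 0 <= c / r ^+ 2 * g 1 * (1/2) ^+ j * rho.
  move=> c c0; apply: mulr_ge0; last exact: ltW.
  apply: mulr_ge0 => //; apply: mulr_ge0; last exact: ltW.
  by apply: divr_ge0 => //; exact: exprn_ge0 (ltW ra).
have base : lam * ss_nrm F \1_A <= 8 / r ^+ 2 * g 1 * (1/2) ^+ j * rho.
  have [A0|Apos] := eqVneq (mu A) 0.
    by rewrite nA0 // mulr0 Cpos.
  have Apos' : (0 < mu A)%E by rewrite lt0e Apos measure_ge0.
  rewrite nAp //.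
  set m := fine (mu A).
  have m0 : 0 < m by rewrite -lte_fin -mu_fin.
  have mj : m <= r ^+ j by rewrite -lee_fin -mu_fin.
  have m1 : m <= 1 by apply: fine_le1.
  have pm : 0 < phi m by apply: (phi_pos cphi); rewrite m0 m1.
  have pm1 : phi m <= phi 1 by apply: (phi_mono cphi).
  have gm := g_small cphi cpsi r0 hr m0 mj.
  have e1 : lam * psi m <= 4 * rho * g m.
    have pm' : 0 < psi m by apply: (psi_pos cpsi); rewrite m0 m1.
    have h4 : (0:R) < 4 by lra.
    rewrite /lam /g -!mulrA ler_pM2l // ler_pM2l // mulrC ler_pM2l //.
    by rewrite lef_pV2 ?posrE.
  apply: (le_trans e1).
  have e2 : (1/4 : R) ^+ j <= (1/2) ^+ j * (1/2) ^+ j by apply: quarter.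
  have e3 : 2 / r <= 2 / r ^+ 2.
    rewrite ler_pM2l // lef_pV2 ?posrE ?exprn_gt0 // expr2 ler_piMr //; lra.
  have hj1 : (1/2 : R) ^+ j <= 1 by rewrite exprn_ile1 //; lra.
  have hq0 : 0 <= (1/4 : R) ^+ j by rewrite exprn_ge0 //; lra.
  have : g m <= 2 / r ^+ 2 * ((1/2) ^+ j * g 1).
    apply: (le_trans gm); apply: ler_pM => //; first by rewrite divr_ge0 // ltW.
      by rewrite mulr_ge0 // ltW.
    apply: ler_wpM2r; first exact: ltW g1.
    by apply: (le_trans e2); rewrite ler_piMr.
  move=> h.
  have -> : 8 / r ^+ 2 * g 1 * (1 / 2) ^+ j * rho = 4 * rho * (2 / r ^+ 2 * ((1 / 2) ^+ j * g 1)).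
    by field; rewrite lt0r_neq0.
  apply: ler_wpM2l => //; apply: mulr_ge0 => //; lra.
have terms : forall k : 'I_N,
    ss_nrm F (fun t => (lam * Q ^+ k.+1) * (\1_(Ak k) t : R)) <=
    2 / r ^+ 2 * g 1 * (1/2) ^+ j * rho * (1/2) ^+ k.
  move=> k.
  have hk0 : 0 <= (1/2 : R) ^+ k by rewrite exprn_ge0 //; lra.
  have Ck : 0 <= 2 / r ^+ 2 * g 1 * (1/2) ^+ j * rho * (1/2) ^+ k.
    by apply: mulr_ge0 => //; apply: Cpos.
  have [mk [nk0 nkp]] := ind_mem hF (mAk k) (AkI k).
  have c0 : 0 < lam * Q ^+ k by rewrite mulr_gt0 // exprn_gt0.
  rewrite ss_nrmZ // gtr0_norm; last by rewrite mulr_gt0 // exprn_gt0.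
  have [A0|Apos] := eqVneq (mu (Ak k)) 0.
    by rewrite nk0 // mulr0.
  have Apos' : (0 < mu (Ak k))%E by rewrite lt0e Apos measure_ge0.
  rewrite nkp //.
  set m := fine (mu (Ak k)).
  have m0 : 0 < m by rewrite -lte_fin -mu_fin.
  have m1 : m <= 1 by apply: fine_le1.
  have rk : 0 < r ^+ k <= 1 by rewrite exprn_gt0 //= exprn_ile1 //; exact: ltW.
  have mk1 : m <= r ^+ k.
    have hph : r ^+ k / 2 * phi 1 <= phi (1 * r ^+ k).
      by apply: cG_half => //; rewrite ltr01 lexx.
    rewrite mul1r in hph.
    have : rho < lam * Q ^+ k * phi (r ^+ k).
      have e : lam * Q ^+ k * (r ^+ k / 2 * phi 1) = 2 * rho.
        have -> : lam * Q ^+ k * (r ^+ k / 2 * phi 1) = lam * (Q ^+ k * r ^+ k) * (phi 1 / 2) by ring.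
        by rewrite QrK mulr1 /lam; field; rewrite lt0r_neq0.
      have : 2 * rho <= lam * Q ^+ k * phi (r ^+ k).
        by rewrite -e ler_wpM2l // ltW.
      lra.
    move=> hlt.
    have := smallmeas hE cphi xE c0 rk hlt.
    by move=> h; rewrite -lee_fin -(mu_fin (mAk k) (AkI k)); exact h.
  have mj : m <= r ^+ j.
    rewrite -lee_fin -(mu_fin (mAk k) (AkI k)); apply: le_trans muA.
    by apply: le_measure; [rewrite inE; exact: mAk | rewrite inE; exact: mA | exact: AkA].
  have low : lam * Q ^+ k * phi m <= rho.
    have hp : forall t, Ak k t -> lam * Q ^+ k <= `|x t| by move=> t [_ /= h]; apply: ltW.
    exact: (lowb hE xE (mAk k) (AkI k) (ltW c0) hp Apos').
  have pm : 0 < phi m by apply: (phi_pos cphi); rewrite m0 m1.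
  have [J [hJk [hJj hmJ]]] : exists J, (k <= J)%N /\ (j <= J)%N /\ m <= r ^+ J.
    by case: (leqP k j) => [kj|jk]; [exists j | exists k; rewrite (ltnW jk)].
  have gm := g_small cphi cpsi r0 hr m0 hmJ.
  have gm2 : g m <= 2 / r * ((1/2) ^+ k * (1/2) ^+ j * g 1).
    apply: (le_trans gm); apply: ler_wpM2l; first by rewrite divr_ge0 // ltW.
    by apply: ler_wpM2r; [exact: ltW g1 | exact: quarter].
  have -> : lam * Q ^+ k.+1 * psi m = Q * (lam * Q ^+ k * phi m) * g m.
    by rewrite /g exprS; field; rewrite lt0r_neq0.
  have gm0 : 0 <= g m by apply: ltW; apply: (g_pos cphi cpsi); rewrite m0 m1.
  apply: le_trans (ler_wpM2r gm0 (ler_wpM2l (ltW Q0) low)) _.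
  apply: le_trans (ler_wpM2l (mulr_ge0 (ltW Q0) (ltW rhop)) gm2) _.
  rewrite le_eqVlt; apply/orP; left; apply/eqP.
  by rewrite /Q; field; rewrite lt0r_neq0.
have hsum : ss_nrm F (fun t => \sum_(k < N) (lam * Q ^+ k.+1) * (\1_(Ak k) t : R)) <=
    \sum_(k < N) 2 / r ^+ 2 * g 1 * (1/2) ^+ j * rho * (1/2) ^+ k.
  apply: le_trans sle _; apply: ler_sum => k _; exact: terms k.
apply: (le_trans (lerD base hsum)).
rewrite -mulr_sumr.
have hC : 0 <= 2 / r ^+ 2 * g 1 * (1/2) ^+ j * rho by apply: Cpos.
have h := ler_wpM2l hC (geo2le R N).
apply: le_trans (lerD (lexx (8 / r ^+ 2 * g 1 * (1/2) ^+ j * rho)) h) _.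
rewrite le_eqVlt; apply/orP; left; apply/eqP.
by rewrite /K; field; rewrite lt0r_neq0.
Qed.



Lemma exnat (a : R) : exists n : nat, a < n%:R.
Proof.
exists (Num.Def.archi_bound `|a|).
exact: le_lt_trans (ler_norm a) (archi_boundP (normr_ge0 a)).
Qed.

Lemma small_pow (c e : R) : 0 < e -> 0 <= c -> exists j : nat, c * (1/2) ^+ j < e.
Proof.
move=> e0 c0.
have ab : `|(1/2 : R)| < 1 by rewrite ger0_norm; lra.
have hp : 0 < e / (c + 1) by rewrite divr_gt0 //; lra.
have ev := @cvgr_lt _ _ _ eventually_filter _ 0 (cvg_expr ab) _ hp.
have [n hn] := filter_ex ev.
exists n; rewrite ltr_pdivlMr in hn; last by lra.
have hn0 : 0 <= (1/2 : R) ^+ n by rewrite exprn_ge0 //; lra.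
apply: le_lt_trans hn; rewrite mulrC ler_wpM2l //; lra.
Qed.

Lemma measU_le (D B C : set R) : measurable B -> measurable C -> measurable D ->
  D `<=` B `|` C -> (mu D <= mu B + mu C)%E.
Proof.
move=> mB mC mD DBC.
apply: le_trans (measureU2 mu mB mC).
by apply: le_measure => //; rewrite inE //; exact: measurableU.
Qed.

Lemma lemB (x : R -> R) (A : set R) (j : nat) :
  ss_mem E x -> measurable A -> A `<=` I01 ->
  (forall t, I01 t -> x t != 0 -> A t) -> (mu A <= (r ^+ j)%:E)%E ->
  ss_mem F x /\ ss_nrm F x <= K * (1/2) ^+ j * ss_nrm E x.
Proof.
move=> xE mA AI supp muA.
have mx := ss_meas xE.
have [ra rb] := andP r0.
set rho := ss_nrm E x.
have rho0 : 0 <= rho by apply: ss_nrm_ge0.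
have [rz|rpos] := eqVneq rho 0.
  have hae : ae01 (fun t => x t = 0) by apply/(ss_nrm_eq0 xE).
  have [m n] := aezero F mx hae.
  by split => //; rewrite n rz mulr0.
have rhop : 0 < rho by rewrite lt0r rpos rho0.
set lv := fun c : R => I01 `&` [set t | (c < `|x t|)%R].
have mlv : forall c, measurable (lv c) by move=> c; apply: lvl.
set B := fun n : nat => I01 `\` lv n%:R.
have mB : forall n, measurable (B n) by move=> n; apply: measurableD => //; exact: mI01.
set u := fun (n : nat) t => x t * (\1_(B n) t : R).
have mu_ : forall n, measurable_fun I01 (u n).
  by move=> n; apply: measurable_realfun.measurable_funM => //; apply: measurable_realfun.measurable_indic.
have u2 : forall n t, `|u n t| <= `|x t|.
  move=> n t; rewrite /u indicE normrM.
  by case: (t \in B n); rewrite ?normr1 ?normr0 ?mulr1 ?mulr0.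
have u4 : forall n t, I01 t -> `|x t| <= n%:R -> u n t = x t.
  move=> n t It h; rewrite /u indicE mem_set ?mulr1 //.
  by split => // -[_ /=]; rewrite ltNge h.
have u3 : forall n t, I01 t -> `|u n t| <= n%:R.
  move=> n t It; rewrite /u indicE.
  case: (boolP (t \in B n)) => tB; last by rewrite mulr0 normr0.
  rewrite mulr1; move: tB; rewrite inE => -[_ /=].
  by rewrite /lv /= => h; rewrite leNgt; apply/negP => h'; apply: h.
have uE : forall n, ss_mem E (u n) /\ ss_nrm E (u n) <= rho.
  by move=> n; apply: ss_ideal => // t _; apply: u2.
have uF : forall n, ss_mem F (u n) /\ ss_nrm F (u n) <= K * (1/2) ^+ j * rho.
  move=> n.
  have [h1 h2] := uE n.
  have hs : forall t, I01 t -> u n t != 0 -> A t.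
    move=> t It h; apply: supp => //; apply/eqP => x0; move/eqP: h; apply.
    by rewrite /u x0 mul0r.
  have [h3 h4] := lemA h1 mA AI hs muA (u3 n).
  split => //; apply: le_trans h4 _; apply: ler_wpM2l => //.
  by apply: mulr_ge0; [exact: K_ge0 | rewrite exprn_ge0 //; lra].
have cauchy : forall e : R, 0 < e -> exists N : nat, forall m n : nat, (N <= m)%N -> (N <= n)%N ->
    ss_nrm F (fun t => u n t - u m t) < e.
  move=> e e0.
  have [j' hj'] := small_pow (c := K * rho) e0 (mulr_ge0 K_ge0 rho0).
  have rj : 0 < r ^+ j' <= 1 by rewrite exprn_gt0 //= exprn_ile1 //; lra.
  have pj : 0 < phi (r ^+ j') by apply: (phi_pos cphi).
  have [N hN] := exnat (rho / phi (r ^+ j')).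
  exists N.+1 => m n hm hn.
  set d := fun t => u n t - u m t.
  have md : measurable_fun I01 d by apply: measurable_realfun.measurable_funB.
  have dle : forall t, I01 t -> `|d t| <= `|x t|.
    move=> t It; rewrite /d /u -mulrBr normrM.
    apply: ler_piMr => //; rewrite !indicE.
    by case: (t \in B n); case: (t \in B m); rewrite ?subrr ?subr0 ?sub0r ?normrN ?normr1 ?normr0.
  have [dE dEn] := ss_ideal xE md dle.
  have N0 : 0 < N.+1%:R :> R by rewrite ltr0Sn.
  have hlt : rho < N.+1%:R * phi (r ^+ j').
    rewrite -ltr_pdivrMr //; apply: lt_trans hN _; rewrite ltr_nat //.
  have muN := smallmeas hE cphi xE N0 rj hlt.
  have dsupp : forall t, I01 t -> d t != 0 -> lv N.+1%:R t.
    move=> t It dt; split => //=; rewrite ltNge; apply/negP => h'.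
    move: dt; apply/negP; rewrite negbK.
    rewrite /d (u4 n t It) ?(u4 m t It) ?subrr //.
      by apply: (le_trans h'); rewrite ler_nat.
    by apply: (le_trans h'); rewrite ler_nat.
  have dbnd : forall t, I01 t -> `|d t| <= n%:R + m%:R.
    move=> t It; apply: le_trans (ler_normB _ _) _.
    by apply: lerD; apply: u3.
  have [_ dF] := lemA dE (mlv _) (fun t h => proj1 h) dsupp muN dbnd.
  apply: le_lt_trans dF _.
  apply: le_lt_trans hj'.
  have hj0 : 0 <= (1/2 : R) ^+ j' by rewrite exprn_ge0 //; lra.
  have h1 := ler_wpM2r hj0 dEn.
  have -> : K * (1/2) ^+ j' * ss_nrm E d = K * (ss_nrm E d * (1/2) ^+ j') by ring.
  have -> : K * rho * (1/2) ^+ j' = K * (rho * (1/2) ^+ j') by ring.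
  apply: ler_wpM2l; [exact: K_ge0 | exact: h1].
have [z [zF zconv]] := ss_complete (fun n => proj1 (uF n)) cauchy.
have mz := ss_meas zF.
have mxz : measurable_fun I01 (fun t => x t - z t) by apply: measurable_realfun.measurable_funB.
have hxz : ae01 (fun t => x t - z t = 0).
  set D := fun i : nat => I01 `&` [set t | (((i.+1)%:R)^-1 < `|x t - z t|)%R].
  have Dneg : forall i, mu.-negligible (D i).
    move=> i.
    set tau := ((i.+1)%:R)^-1 : R.
    have tau0 : 0 < tau by rewrite /tau invr_gt0 ltr0Sn.
    have key : forall eps, 0 < eps <= 1 -> (mu (D i) <= (eps + eps)%:E)%E.
      move=> eps heps.
      have pe : 0 < phi eps by apply: (phi_pos cphi).
      have se : 0 < psi eps by apply: (psi_pos cpsi).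
      have [N1 hN1] := zconv (tau * psi eps) (mulr_gt0 tau0 se).
      have [n1 hn1] := exnat (rho / phi eps).
      set n := maxn N1 n1.+1.
      have hn : (N1 <= n)%N by rewrite leq_maxl.
      have hn1' : (n1.+1 <= n)%N by rewrite leq_maxr.
      have n0 : 0 < n%:R :> R by rewrite ltr0n; apply: leq_trans hn1'.
      have hC : rho < n%:R * phi eps.
        rewrite -ltr_pdivrMr //; apply: lt_le_trans hn1 _; rewrite ler_nat.
        exact: leq_trans (leqnSn _) hn1'.
      have muC := smallmeas hE cphi xE n0 heps hC.
      have wF := ss_memB (proj1 (uF n)) zF.
      have muB := smallmeas hF cpsi wF tau0 heps (hN1 n hn).
      have mw : measurable_fun I01 (fun t => u n t - z t) by apply: measurable_realfun.measurable_funB.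
      have : (mu (D i) <= mu (I01 `&` [set t | (tau < `|u n t - z t|)%R]) + mu (lv n%:R))%E.
        apply: measU_le; [exact: lvl | exact: mlv | exact: lvl |].
        move=> t [It /= ht].
        case: (boolP ((n%:R < `|x t|)%R)) => hxn; first by right; split.
        left; split => //=; rewrite (u4 n t It) //; last by rewrite leNgt.
      move=> h; apply: le_trans h _; rewrite EFinD; exact: leeD.
    have DI : D i `<=` I01 by move=> t [].
    have mD : measurable (D i) by apply: lvl.
    suff h0 : mu (D i) = 0 by apply/negligibleP.
    apply/eqP; rewrite eq_le measure_ge0 andbT (mu_fin mD DI) lee_fin.
    apply/ler_addgt0Pr => e e0; rewrite add0r.
    set eps := Num.min 1 (e / 2).
    have heps : 0 < eps <= 1 by rewrite /eps lt_min ltr01 /= divr_gt0 //= ge_min lexx.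
    have := key eps heps; rewrite (mu_fin mD DI) lee_fin => h; apply: le_trans h _.
    have : eps <= e / 2 by rewrite /eps ge_min lexx orbT.
    lra.
  have nb := negligible_bigcup Dneg.
  apply: negligibleS nb => t [It /= ht].
  have hpos : 0 < `|x t - z t| by rewrite normr_gt0; apply/eqP.
  have [n hn] := exnat (`|x t - z t|^-1).
  exists n => //; split => //=.
  rewrite -(invrK `|x t - z t|) ltf_pV2 ?posrE ?invr_gt0 ?ltr0Sn //.
  by apply: lt_trans hn _; rewrite ltr_nat.
have [wF wn] := aezero F mxz hxz.
have ex : x = (fun t => z t + (x t - z t)) by apply: funext => t; rewrite addrC subrK.
have xF : ss_mem F x by rewrite ex; apply: ss_memD.
split => //.
have hz : ss_nrm F z <= K * (1/2) ^+ j * rho.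
  apply/ler_addgt0Pr => e e0.
  have [N hN] := zconv e e0.
  have ez : z = (fun t => u N t + (z t - u N t)) by apply: funext => t; rewrite addrC subrK.
  have uNF := proj1 (uF N).
  rewrite ez; apply: le_trans (ss_nrmD uNF (ss_memB zF uNF)) _.
  apply: lerD; first exact: (proj2 (uF N)).
  rewrite ss_nrmB_sym //; apply: ltW; exact: hN.
rewrite ex; apply: le_trans (ss_nrmD zF wF) _.
by rewrite wn addr0.
Qed.

Lemma supp_set (x : R -> R) : ss_mem E x ->
  let S := I01 `&` [set t | (0 < `|x t|)%R] in
  [/\ measurable S, S `<=` I01 & forall t, I01 t -> x t != 0 -> S t].
Proof.
move=> xE S; split.
- by apply: lvl; exact: (ss_meas xE).
- by move=> t [].
- by move=> t It h; split => //=; rewrite normr_gt0.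
Qed.

Lemma dss : inclusion_DSS E F.
Proof.
move=> [xs [xsE [xsnz [xsdisj [c [c0 hc]]]]]].
have [ra rb] := andP r0.
have [j hj] := small_pow c0 K_ge0.
set S := fun n => I01 `&` [set t | (0 < `|xs n t|)%R].
have mS : forall n, measurable (S n) by move=> n; apply: lvl; exact: (ss_meas (xsE n)).
have SI : forall n, S n `<=` I01 by move=> n t [].
have rj : 0 < r ^+ j by rewrite exprn_gt0.
have [n hn] : exists n, (mu (S n) <= (r ^+ j)%:E)%E.
  apply/not_existsP => hall.
  have hgt : forall n, ((r ^+ j)%:E < mu (S n))%E.
    by move=> n; rewrite ltNge; apply/negP => h; apply: (hall n).
  set U := fun k : nat => I01 `&` [set t | exists2 n, (n < k)%N & (0 < `|xs n t|)%R].
  have U0 : U 0 = set0 by apply/seteqP; split => t // [_ [n]].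
  have US : forall k, U k.+1 = U k `|` S k.
    move=> k; apply/seteqP; split => t.
      move=> [It [n hn1 hn2]]; rewrite ltnS leq_eqVlt in hn1.
      case/orP: hn1 => [/eqP nk|hn1]; first by right; split => //=; rewrite -nk.
      by left; split => //; exists n.
    case=> [[It [n hn1 hn2]]|[It h]]; split => //.
      by exists n => //; apply: ltnW.
    by exists k.
  have mU : forall k, measurable (U k).
    elim=> [|k IH]; first by rewrite U0.
    by rewrite US; apply: measurableU.
  have UI : forall k, U k `<=` I01 by move=> k t [].
  have low : forall k, ((k%:R * r ^+ j)%:E <= mu (U k))%E.
    elim=> [|k IH]; first by rewrite mul0r measure_ge0.
    have hfin : (mu (U k) < +oo)%E by rewrite (mu_fin (mU k) (UI k)) ltry.
    have hIS : mu (U k `&` S k) = 0.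
      apply/negligibleP; first exact: (measurableI _ _ (mU k) (mS k)).
      set Nn := fun n : nat => if n == k then set0 else I01 `&` [set t | ~ (xs n t * xs k t = 0)].
      have nN : forall n, mu.-negligible (Nn n).
        move=> n; rewrite /Nn; case: eqP => [_|nk]; first exact: negligible_set0.
        exact: xsdisj.
      apply: negligibleS (negligible_bigcup nN).
      move=> t [[It [n hn1 hn2]] [_ /= hk]].
      exists n => //; rewrite /Nn; case: eqP => [nk|_].
        by move: hn1; rewrite nk ltnn.
      split => //= h; move/eqP: h; rewrite mulf_eq0 => /orP[] /eqP h.
        by move: hn2; rewrite h normr0 ltxx.
      by move: hk; rewrite h normr0 ltxx.
    have hU := @measureUfinl _ _ _ mu _ _ (mU k) (mS k) hfin.
    have h0 : forall a b c0 : \bar R, c0 = 0 -> (a <= b)%E -> (a <= b - c0)%E.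
      by move=> a b c1 ->; rewrite sube0.
    rewrite US hU; apply: h0; first exact: hIS.
    rewrite -[k.+1]addn1 natrD mulrDl mul1r EFinD.
    apply: leeD; [exact: IH | exact: ltW (hgt k)].
  have [K' hK'] := exnat ((r ^+ j)^-1).
  have := low K'; rewrite (mu_fin (mU K') (UI K')) lee_fin => h1.
  have h2 := fine_le1 (mU K') (UI K').
  have : 1 < K'%:R * r ^+ j by rewrite -ltr_pdivrMr // div1r.
  lra.
have [mn Sn supn] := supp_set (xsE n).
have [_ hB] := lemB (xsE n) (mS n) (SI n) supn hn.
have hcl : clspan E xs (xs n).
  split; first exact: xsE.
  move=> e e0; exists n.+1, (fun i => (i == n)%:R).
  have -> : (fun t => xs n t - \sum_(i < n.+1) ((i : nat) == n)%:R * xs i t) = (fun _ => 0).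
    apply: funext => t; rewrite big_ord_recr /= eqxx mul1r big1 ?add0r ?subrr //.
    by move=> i _; rewrite (ltn_eqF (ltn_ord i)) mul0r.
  by rewrite nrm0.
have hc1 := hc _ hcl.
have rpos : 0 < ss_nrm E (xs n).
  rewrite lt0r ss_nrm_ge0 // andbT; apply/eqP => h.
  by apply: (xsnz n); apply/(ss_nrm_eq0 (xsE n)).
have : c * ss_nrm E (xs n) <= K * (1/2) ^+ j * ss_nrm E (xs n) by apply: le_trans hB.
rewrite ler_pM2r // => h.
by move: (le_lt_trans h hj); rewrite ltxx.
Qed.
End Main.

Local Close Scope classical_set_scope.

Theorem theorem5 (R : realType) (phi psi : R -> R) (E F : SymSpace R) :
  classG phi -> classG psi ->
  0 < lower_dilation_index (fun t => psi t / phi t) ->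
  has_fundamental_function E phi -> has_fundamental_function F psi ->
  (forall x, ss_mem E x -> ss_mem F x) /\
  (exists C : R, forall x, ss_mem E x -> ss_nrm F x <= C * ss_nrm E x) /\
  inclusion_DSS E F.
Proof.
move=> cphi cpsi hind hE hF.
have [r [r0 hr]] := index_r cphi cpsi hind.
have B := lemB cphi cpsi hE hF r0 hr.
have D := dss cphi cpsi hE hF r0 hr.
have main : forall x, ss_mem E x -> ss_mem F x /\
    ss_nrm F x <= 12 / r ^+ 2 * ((fun t => psi t / phi t) 1) * (1/2) ^+ 0 * ss_nrm E x.
  move=> x xE; have := supp_set xE; move=> /= [mS SI sup].
  have hm : (lebesgue_measure (I01 `&` [set t | (0 < `|x t|)%R])%classic <= (r ^+ 0)%:E)%E.
    by rewrite expr0; exact: mu_le1 mS SI.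
  exact: (B _ _ _ xE mS SI sup hm).
split; first by move=> x /main [].
split; last exact: D.
exists (12 / r ^+ 2 * ((fun t => psi t / phi t) 1)) => x /main [_].
by rewrite expr0 mulr1.
Qed.
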